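(* Let $G$ be a connected multi-ended graph on $X$ and let $C$ be a cut. Let $a$ and $b$ be the numbers of finite and infinite connected components of the induced subgraph $G|_C$, respectively. Then $a+b\le|\delta C|$, and in fact $$a<|\delta C|\quad\text{and}\quad 1\le b\le\frac{|\delta C|-a}{k_0}.$$ In particular, every thin cut is connected, and hence every thin cut is neat.
   Context: A graph on $X$ is an irreflexive symmetric relation $G\subseteq X^2$. For $A\subseteq X$, $\delta A$ is the set of edges with one endpoint in $A$ and the other in $X\setminus A$. A cut is a set $A\subseteq X$ with $A$ and $X\setminus A$ infinite and $\delta A$ finite; $G$ is multi-ended if it has a cut. $k_0:=\min\{|\delta A|: A$ a cut$\}$, and a cut $A$ is thin if $|\delta A|=k_0$. A set $A$ is connected if the induced subgraph $G|_A$ is connected; a cut $A$ is neat if both $A$ and $X\setminus A$ are connected. *)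

(* Defs.v *)
From Stdlib Require Import List Arith Lia.
Import ListNotations.
Set Implicit Arguments.

Section Graphs.
Variable X : Type.

Definition is_graph (G : X -> X -> Prop) : Prop :=
  (forall x, ~ G x x) /\ (forall x y, G x y -> G y x).

Definition has_card {T : Type} (P : T -> Prop) (n : nat) : Prop :=
  exists l : list T, NoDup l /\ (forall t, P t <-> In t l) /\ length l = n.

Definition finite_set {T : Type} (P : T -> Prop) : Prop := exists n, has_card P n.
Definition infinite_set {T : Type} (P : T -> Prop) : Prop := ~ finite_set P.

Definition compl (A : X -> Prop) : X -> Prop := fun x => ~ A x.

(* delta A: edges with one endpoint in A and the other outside A; each such
   edge {x,y} is represented by the unique ordered pair (x,y) with x in A. *)
Definition boundary (G : X -> X -> Prop) (A : X -> Prop) : X * X -> Prop :=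
  fun p => G (fst p) (snd p) /\ A (fst p) /\ ~ A (snd p).

(* x and y are joined by a path of G all of whose vertices lie in A
   (i.e. connected in the induced subgraph G|_A). *)
Inductive conn_in (G : X -> X -> Prop) (A : X -> Prop) (x : X) : X -> Prop :=
| conn_refl : A x -> conn_in G A x x
| conn_step : forall y z, conn_in G A x y -> G y z -> A z -> conn_in G A x z.

Definition connected_graph (G : X -> X -> Prop) : Prop :=
  forall x y, conn_in G (fun _ => True) x y.

Definition connected_set (G : X -> X -> Prop) (A : X -> Prop) : Prop :=
  forall x y, A x -> A y -> conn_in G A x y.

Definition is_cut (G : X -> X -> Prop) (A : X -> Prop) : Prop :=
  infinite_set A /\ infinite_set (compl A) /\ finite_set (boundary G A).

Definition multi_ended (G : X -> X -> Prop) : Prop := exists A, is_cut G A.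

Definition is_k0 (G : X -> X -> Prop) (k : nat) : Prop :=
  (exists A, is_cut G A /\ has_card (boundary G A) k) /\
  (forall A m, is_cut G A -> has_card (boundary G A) m -> k <= m).

Definition thin (G : X -> X -> Prop) (A : X -> Prop) : Prop :=
  is_cut G A /\ exists k, is_k0 G k /\ has_card (boundary G A) k.

Definition neat (G : X -> X -> Prop) (A : X -> Prop) : Prop :=
  is_cut G A /\ connected_set G A /\ connected_set G (compl A).

(* r is a list of representatives, one for each connected component of G|_C. *)
Definition component_reps (G : X -> X -> Prop) (C : X -> Prop) (r : list X) : Prop :=
  (forall x, In x r -> C x) /\
  (forall i j d, i < length r -> j < length r -> i <> j ->
     ~ conn_in G C (nth i r d) (nth j r d)) /\
  (forall x, C x -> exists y, In y r /\ conn_in G C y x).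

End Graphs.

(* Main.v *)
Require Import Defs.
From Stdlib Require Import List Arith.
From Stdlib Require Import Lia ClassicalEpsilon Classical FinFun.
Import ListNotations.

Definition dec (P : Prop) : bool := if excluded_middle_informative P then true else false.
Lemma dec_true (P : Prop) : dec P = true <-> P.
Proof. unfold dec; destruct (excluded_middle_informative P); split; intros; auto; try discriminate; contradiction. Qed.
Lemma dec_t (P : Prop) : dec P = true -> P.
Proof. apply dec_true. Qed.
Lemma dec_false (P : Prop) : dec P = false -> ~ P.
Proof. unfold dec; destruct (excluded_middle_informative P); auto; discriminate. Qed.

Lemma fin_of_list {T : Type} (l : list T) : forall (P : T -> Prop),
  (forall t, P t -> In t l) -> finite_set P.
Proof.
  induction l as [|a l IH]; intros P Hl.
  - exists 0, []. split; [constructor|]. split; [|reflexivity].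
    intros t; split; [intro H; apply (Hl t H) | intros []].
  - destruct (IH (fun t => P t /\ t <> a)) as [n [l0 [Hnd [Hiff Hlen]]]].
    { intros t [Ht Hne]. destruct (Hl t Ht); [congruence | auto]. }
    destruct (classic (P a)) as [Pa|nPa].
    + exists (S n), (a :: l0). split; [|split].
      * constructor; auto. intro H; apply Hiff in H; tauto.
      * intros t; split.
        -- intro Ht. destruct (classic (t = a)); [left; auto | right; apply Hiff; auto].
        -- intros [<-|H]; [auto | apply Hiff in H; tauto].
      * simpl; lia.
    + exists n, l0. split; [auto|]. split; [|auto].
      intros t; split.
      * intro Ht; apply Hiff; split; auto; intro; subst; contradiction.
      * intro H; apply Hiff in H; tauto.
Qed.

Lemma fin_sub {T : Type} (P Q : T -> Prop) : finite_set Q -> (forall t, P t -> Q t) -> finite_set P.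
Proof.
  intros [n [l [_ [Hl _]]]] H. apply (fin_of_list l). intros t Ht; apply Hl; auto.
Qed.

Lemma inf_nonempty {T : Type} (P : T -> Prop) : infinite_set P -> exists x, P x.
Proof.
  intros H. apply NNPP; intro Hn. apply H. apply (fin_of_list []).
  intros t Ht; apply Hn; eauto.
Qed.

Lemma card_le {T : Type} (P : T -> Prop) m l : has_card P m -> (forall t, P t -> In t l) -> m <= length l.
Proof.
  intros [l0 [Hnd [Hiff Hlen]]] H. subst. apply NoDup_incl_length; auto.
  intros t Ht; apply H, Hiff; auto.
Qed.

Lemma fin_union {T A : Type} (Q : A -> T -> Prop) (R : list A) : forall (P : T -> Prop),
  (forall r, In r R -> finite_set (Q r)) -> (forall x, P x -> exists r, In r R /\ Q r x) -> finite_set P.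
Proof.
  induction R as [|a R IH]; intros P Hf Hc.
  - apply (fin_of_list []). intros t Ht; destruct (Hc t Ht) as [r [[] _]].
  - destruct (Hf a (or_introl eq_refl)) as [n [la [_ [Hla _]]]].
    destruct (IH (fun x => P x /\ ~ Q a x)) as [m [lp [_ [Hlp _]]]].
    + intros r Hr; apply Hf; right; auto.
    + intros x [Hx Hn]. destruct (Hc x Hx) as [r [[<-|Hr] Hq]]; [contradiction|eauto].
    + apply (fin_of_list (la ++ lp)). intros t Ht. apply in_or_app.
      destruct (classic (Q a t)); [left; apply Hla; auto | right; apply Hlp; auto].
Qed.

Lemma conn_A_r {X} (G : X -> X -> Prop) A x y : conn_in G A x y -> A y.
Proof. induction 1; auto. Qed.
Lemma conn_A_l {X} (G : X -> X -> Prop) A x y : conn_in G A x y -> A x.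
Proof. induction 1; auto. Qed.
Lemma conn_trans {X} (G : X -> X -> Prop) A x y z : conn_in G A x y -> conn_in G A y z -> conn_in G A x z.
Proof. intros H1 H2; induction H2; auto. eapply conn_step; eauto. Qed.
Lemma conn_sym {X} (G : X -> X -> Prop) A x y : (forall a b, G a b -> G b a) ->
  conn_in G A x y -> conn_in G A y x.
Proof.
  intros Hs H; induction H.
  - constructor; auto.
  - apply conn_trans with y; auto. eapply conn_step; [constructor; auto | apply Hs; auto | eapply conn_A_r; eauto].
Qed.

Lemma exit {X} (G : X -> X -> Prop) (A : X -> Prop) x z : A x -> conn_in G (fun _ => True) x z ->
  conn_in G A x z \/ exists u v, conn_in G A x u /\ G u v /\ ~ A v.
Proof.
  intros Hx H; induction H.
  - left; constructor; auto.
  - destruct IHconn_in as [Hc|Hc]; [|right; auto].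
    destruct (classic (A z)); [left; eapply conn_step; eauto | right; eauto].
Qed.

Ltac dd := match goal with |- context [dec ?P] => let E := fresh "E" in destruct (dec P) eqn:E end.

Fixpoint nub {X} (G : X -> X -> Prop) (C : X -> Prop) (l : list X) : list X :=
  match l with
  | [] => []
  | x :: l' => if dec (exists y, In y (nub G C l') /\ conn_in G C x y) then nub G C l'
               else x :: nub G C l'
  end.

Lemma nub_cover {X} (G : X -> X -> Prop) C l : (forall x, In x l -> C x) ->
  forall x, In x l -> exists y, In y (nub G C l) /\ conn_in G C x y.
Proof.
  induction l as [|a l IH]; intros HC x Hx; [destruct Hx|].
  simpl. destruct Hx as [<-|Hx].
  - dd.
    + apply dec_t in E; exact E.
    + exists a; split; [left; auto | constructor; apply HC; left; auto].
  - destruct (IH (fun y Hy => HC y (or_intror Hy)) x Hx) as [y [Hy Hc]].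
    dd; [eauto | exists y; split; [right|]; auto].
Qed.

Lemma nub_pw {X} (G : X -> X -> Prop) C l :
  ForallOrdPairs (fun a b => ~ conn_in G C a b) (nub G C l).
Proof.
  induction l as [|a l IH]; simpl; [constructor|].
  dd; auto. constructor; auto.
  apply dec_false in E. apply Forall_forall. intros y Hy Hc; apply E; eauto.
Qed.

Lemma nub_incl {X} (G : X -> X -> Prop) C l y : In y (nub G C l) -> In y l.
Proof.
  induction l as [|a l IH]; simpl; auto.
  dd; simpl; intuition.
Qed.

Lemma nub_app {X} (G : X -> X -> Prop) C l1 l2 :
  exists l1', incl l1' l1 /\ nub G C (l1 ++ l2) = l1' ++ nub G C l2.
Proof.
  induction l1 as [|a l1 [l1' [Hi Heq]]].
  - exists []; split; [intros t []| reflexivity].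
  - simpl. rewrite Heq. dd.
    + exists l1'; split; auto. apply incl_tl; auto.
    + exists (a :: l1'); split; auto. apply incl_cons; [left; auto | apply incl_tl; auto].
Qed.

Lemma pw_nth {X} (R : X -> X -> Prop) (l : list X) : (forall x y, R x y -> R y x) ->
  ForallOrdPairs R l -> forall i j d, i < length l -> j < length l -> i <> j ->
  R (nth i l d) (nth j l d).
Proof.
  intros Hs H; induction H as [|a l Hf Hp IH]; intros i j d Hi Hj Hij; simpl in *; [lia|].
  rewrite Forall_forall in Hf.
  destruct i, j; [lia | | |].
  - apply Hf, nth_In; lia.
  - apply Hs, Hf, nth_In; lia.
  - apply IH; lia.
Qed.

Lemma sum_filter_le {A B} (f : A -> B -> bool) (R : list A) (L : list B) :
  (forall p, length (filter (fun r => f r p) R) <= 1) ->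
  list_sum (map (fun r => length (filter (f r) L)) R) <= length L.
Proof.
  intros H. induction L as [|p L IH].
  - clear H; induction R; simpl in *; lia.
  - assert (E : list_sum (map (fun r => length (filter (f r) (p :: L))) R) =
       length (filter (fun r => f r p) R) + list_sum (map (fun r => length (filter (f r) L)) R)).
    { clear. induction R as [|a R IH]; simpl in *; auto. destruct (f a p); simpl; lia. }
    rewrite E. specialize (H p). simpl. lia.
Qed.

Lemma filter_nil {A} (f : A -> bool) l : (forall x, In x l -> f x = false) -> filter f l = [].
Proof. induction l; simpl; intros H; auto. rewrite H; auto. Qed.

Lemma cnt_le1 {X} (G : X -> X -> Prop) C (Hs : forall a b, G a b -> G b a) R y :
  ForallOrdPairs (fun a b => ~ conn_in G C a b) R ->
  length (filter (fun r => dec (conn_in G C r y)) R) <= 1.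
Proof.
  induction 1 as [|a l Hf Hp IH]; simpl; [lia|].
  destruct (dec (conn_in G C a y)) eqn:E; [|auto].
  rewrite filter_nil; [simpl; lia|].
  intros x Hx. destruct (dec (conn_in G C x y)) eqn:E2; auto.
  apply dec_t in E; apply dec_t in E2. rewrite Forall_forall in Hf. exfalso; apply (Hf x Hx).
  apply conn_trans with y; auto. apply conn_sym; auto.
Qed.

Lemma sum_ge {A} (g : A -> nat) c l : (forall r, In r l -> c <= g r) -> c * length l <= list_sum (map g l).
Proof.
  induction l as [|a l IH]; simpl; intros H; [lia|].
  assert (c * length l <= list_sum (map g l)) by auto. specialize (H a (or_introl eq_refl)). nia.
Qed.

Lemma part1 (X : Type) (G : X -> X -> Prop)
  (HG : is_graph G) (Hconn : connected_graph G)
  (C : X -> Prop) (HC : is_cut G C) (d k0 : nat)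
  (Hd : has_card (boundary G C) d) (Hk0 : is_k0 G k0) :
  (exists lfin linf : list X,
     component_reps G C (lfin ++ linf) /\
     Forall (fun x => finite_set (conn_in G C x)) lfin /\
     Forall (fun x => infinite_set (conn_in G C x)) linf /\
     length lfin + length linf <= d /\
     length lfin < d /\
     1 <= length linf /\
     length linf * k0 <= d - length lfin).
Proof.
  destruct HG as [Hirr Hsym].
  destruct HC as [HinfC [HinfCc HfinB]].
  destruct Hd as [L [HndL [HL HlenL]]].
  assert (Hk1 : 1 <= k0).
  { destruct Hk0 as [[A [[HA1 [HA2 _]] HcA]] _].
    destruct (inf_nonempty _ HA1) as [a Ha]. destruct (inf_nonempty _ HA2) as [b Hb].
    unfold compl in Hb.
    destruct (exit G A a b Ha (Hconn a b)) as [Hab | [u [v [Hu [Huv Hv]]]]].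
    - exfalso; apply Hb; exact (conn_A_r _ _ _ _ Hab).
    - destruct HcA as [l [_ [Hl Hlen]]].
      assert (In (u, v) l) by (apply Hl; unfold boundary; simpl; repeat split; auto; exact (conn_A_r _ _ _ _ Hu)).
      destruct l; simpl in *; [contradiction | lia]. }
  assert (Hex : forall x, C x -> exists p, In p L /\ conn_in G C x (fst p)).
  { intros x Hx. destruct (inf_nonempty _ HinfCc) as [y Hy]. unfold compl in Hy.
    destruct (exit G C x y Hx (Hconn x y)) as [H|[u [v [Hu [Huv Hv]]]]].
    - exfalso; apply Hy; exact (conn_A_r _ _ _ _ H).
    - exists (u, v); split; [apply HL; unfold boundary; simpl; repeat split; auto; exact (conn_A_r _ _ _ _ Hu) | exact Hu]. }
  set (M := map fst L).
  assert (HM : forall x, In x M -> C x).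
  { intros x Hx. apply in_map_iff in Hx. destruct Hx as [p [<- Hp]]. apply HL in Hp. apply Hp. }
  set (M1 := filter (fun x => dec (finite_set (conn_in G C x))) M).
  set (M2 := filter (fun x => negb (dec (finite_set (conn_in G C x)))) M).
  destruct (nub_app G C M1 M2) as [l1 [Hincl Heq]].
  set (l2 := nub G C M2).
  assert (HinR : forall r, In r (l1 ++ l2) -> In r M).
  { intros r Hr. apply in_app_or in Hr. destruct Hr as [Hr|Hr].
    - apply Hincl in Hr. apply filter_In in Hr; apply Hr.
    - apply nub_incl in Hr. apply filter_In in Hr; apply Hr. }
  assert (Hpw : ForallOrdPairs (fun a b => ~ conn_in G C a b) (l1 ++ l2)).
  { unfold l2. rewrite <- Heq. apply nub_pw. }
  assert (Hcov : forall x, C x -> exists y, In y (l1 ++ l2) /\ conn_in G C y x).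
  { intros x Hx. destruct (Hex x Hx) as [p [Hp Hc]].
    assert (HpM : In (fst p) (M1 ++ M2)).
    { apply in_or_app. assert (In (fst p) M) by (apply in_map; auto).
      destruct (dec (finite_set (conn_in G C (fst p)))) eqn:E;
        [left | right]; apply filter_In; rewrite ?E; auto. }
    destruct (nub_cover G C (M1 ++ M2)) with (x := fst p) as [y [Hy Hc2]]; auto.
    { intros z Hz. apply HM. apply in_app_or in Hz; destruct Hz as [Hz|Hz];
      apply filter_In in Hz; apply Hz. }
    exists y. split; [unfold l2; rewrite <- Heq; auto|].
    apply conn_sym; auto. apply conn_trans with (fst p); auto. }
  assert (Hrep : component_reps G C (l1 ++ l2)).
  { split; [intros x Hx; apply HM, HinR; auto|]. split; [|exact Hcov].
    intros i j d0 Hi Hj Hij. apply (pw_nth (fun a b => ~ conn_in G C a b) (l1 ++ l2)); auto.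
    intros a b H1 H2; apply H1, conn_sym; auto. }
  assert (Hfin : Forall (fun x => finite_set (conn_in G C x)) l1).
  { apply Forall_forall. intros r Hr. apply Hincl in Hr. apply filter_In in Hr.
    apply dec_t, Hr. }
  assert (Hinf : Forall (fun x => infinite_set (conn_in G C x)) l2).
  { apply Forall_forall. intros r Hr. apply nub_incl in Hr. apply filter_In in Hr.
    destruct Hr as [_ Hr]. apply dec_false. destruct (dec _); simpl in *; auto; discriminate. }
  set (cnt := fun r => length (filter (fun p => dec (conn_in G C r (fst p))) L)).
  assert (Hsum : list_sum (map cnt (l1 ++ l2)) <= d).
  { subst d. apply (sum_filter_le (fun r p => dec (conn_in G C r (fst p)))).
    intros p. apply cnt_le1; auto. }
  assert (Hlow1 : forall r, In r l1 -> 1 <= cnt r).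
  { intros r Hr. assert (Cr : C r) by (apply HM, HinR, in_or_app; auto).
    destruct (Hex r Cr) as [p [Hp Hc]]. unfold cnt.
    destruct (filter _ L) eqn:E; [|simpl; lia].
    assert (In p (filter (fun p => dec (conn_in G C r (fst p))) L)).
    { apply filter_In; split; auto. apply dec_true; auto. }
    rewrite E in H; destruct H. }
  assert (Hlowk : forall r, In r l2 -> k0 <= cnt r).
  { intros r Hr. rewrite Forall_forall in Hinf. specialize (Hinf r Hr).
    assert (Hsub : forall p, boundary G (conn_in G C r) p -> boundary G C p).
    { intros [u v] [Huv [Hu Hv]]; simpl in *. split; auto. split; [eapply conn_A_r; eauto|].
      intro Cv; apply Hv. eapply conn_step; eauto. }
    assert (Hcut : is_cut G (conn_in G C r)).
    { split; auto. split.
      - intro Hf. apply HinfCc. apply (fin_sub _ _ Hf). intros t Ht Hc. apply Ht.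
        eapply conn_A_r; eauto.
      - apply (fin_sub _ _ HfinB). auto. }
    destruct Hcut as [c1 [c2 [m Hm]]].
    apply Nat.le_trans with m.
    - apply (proj2 Hk0 (conn_in G C r)); [split; [|split]; auto; exists m; auto | auto].
    - apply (card_le _ _ _ Hm). intros t Ht. apply filter_In. split.
      + apply HL, Hsub; auto.
      + apply dec_true. apply Ht. }
  assert (Hb : length l2 <> 0).
  { intro H0. apply length_zero_iff_nil in H0. apply HinfC.
    apply (fin_union (fun r x => conn_in G C r x) l1).
    - rewrite Forall_forall in Hfin; auto.
    - intros x Hx. destruct (Hcov x Hx) as [y [Hy Hc]]. rewrite H0, app_nil_r in Hy. eauto. }
  assert (S1 : 1 * length l1 <= list_sum (map cnt l1)) by (apply sum_ge; auto).
  assert (S2 : k0 * length l2 <= list_sum (map cnt l2)) by (apply sum_ge; auto).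
  rewrite map_app, list_sum_app in Hsum.
  exists l1, l2. split; [auto|]. split; [auto|]. split; [auto|].
  nia.
Qed.

Lemma thin_conn (X : Type) (G : X -> X -> Prop) (HG : is_graph G) (Hconn : connected_graph G)
  (A : X -> Prop) : thin G A -> connected_set G A.
Proof.
  intros [Hcut [k [Hk Hc]]].
  destruct (part1 X G HG Hconn A Hcut k k Hc Hk) as
    [lf [li [[_ [_ Hcov]] [_ [_ [_ [Hlt [Hb1 Hle]]]]]]]].
  assert (length lf = 0 /\ length li = 1) as [E1 E2] by nia.
  destruct lf; [|simpl in E1; discriminate].
  destruct li as [|r [|]]; simpl in E2; try discriminate.
  intros x y Hx Hy.
  destruct (Hcov x Hx) as [r1 [[<-|[]] H1]].
  destruct (Hcov y Hy) as [r2 [[<-|[]] H2]].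
  apply conn_trans with r; auto. apply conn_sym; auto. apply HG.
Qed.

Lemma thin_compl (X : Type) (G : X -> X -> Prop) (HG : is_graph G)
  (A : X -> Prop) : thin G A -> thin G (compl A).
Proof.
  intros [[Hi1 [Hi2 Hf]] [k [Hk [l [Hnd [Hl Hlen]]]]]].
  assert (Hc : has_card (boundary G (compl A)) k).
  { exists (map (fun p => (snd p, fst p)) l). split; [|split].
    - apply Injective_map_NoDup; auto. intros [a b] [c e] H; simpl in H; congruence.
    - intros [a b]; split.
      + intros [Hab [Ha Hb]]; simpl in *. apply in_map_iff. exists (b, a); split; auto.
        apply Hl. unfold boundary, compl in *; simpl. split; [apply HG; auto|].
        split; auto. apply NNPP; auto.
      + intro H. apply in_map_iff in H. destruct H as [[c e] [Heq Hin]]. simpl in Heq.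
        inversion Heq; subst. apply Hl in Hin. destruct Hin as [H1 [H2 H3]]; simpl in *.
        unfold boundary, compl; simpl. split; [apply HG; auto|]. auto.
    - rewrite length_map; auto. }
  split.
  - split; auto. split.
    + intro Hfin. apply Hi1. apply (fin_sub _ _ Hfin). intros t Ht Hn; contradiction.
    + exists k; auto.
  - exists k; auto.
Qed.

Theorem mainTheorem14 (X : Type) (G : X -> X -> Prop)
  (HG : is_graph G) (Hconn : connected_graph G) (Hme : multi_ended G)
  (C : X -> Prop) (HC : is_cut G C) (d k0 : nat)
  (Hd : has_card (boundary G C) d) (Hk0 : is_k0 G k0) :
  (exists lfin linf : list X,
     component_reps G C (lfin ++ linf) /\
     Forall (fun x => finite_set (conn_in G C x)) lfin /\
     Forall (fun x => infinite_set (conn_in G C x)) linf /\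
     length lfin + length linf <= d /\
     length lfin < d /\
     1 <= length linf /\
     length linf * k0 <= d - length lfin) /\
  (forall A, thin G A -> connected_set G A /\ neat G A).
Proof.
  split; [apply part1; auto|].
  intros A Ht. assert (H1 : connected_set G A) by (apply thin_conn; auto).
  split; auto. split; [apply Ht|]. split; auto.
  apply thin_conn; auto. apply thin_compl; auto.
Qed.
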